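(* For every integer $k\ge 0$, the number of projection-surjective subgroups of $Z_2^k$ is $$n_k=\sum_{i=0}^k(-1)^{i+k}\binom{k}{i}\sum_{j=0}^i{\binom{i}{j}}_2,\qquad\text{where}\qquad {\binom{i}{j}}_2=\frac{\prod_{l=0}^{j-1}\left(2^{i-l}-1\right)}{\prod_{l=1}^j\left(2^l-1\right)}.$$
   Context: A subgroup $H$ of $Z_2^k=Z_2\times\cdots\times Z_2$ is projection-surjective if its image under each of the $k$ coordinate projections $Z_2^k\to Z_2$ is all of $Z_2$. *)

(* Defs.v *)
From HB Require Import structures.
From mathcomp Require Import all_boot all_order all_algebra all_fingroup.
Set Implicit Arguments. Unset Strict Implicit. Unset Printing Implicit Defensive.
Import GRing.Theory Num.Theory.
Local Open Scope ring_scope.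

(* Z_2^k is modelled as the finite additive group of row vectors 'rV['F_2]_k;
   its canonical finGroupType structure (from finalg) has the group law = +. *)

Definition coord_proj (k : nat) (i : 'I_k) (v : 'rV['F_2]_k) : 'F_2 := v ord0 i.

Definition proj_surjective (k : nat) (H : {set 'rV['F_2]_k}) : bool :=
  [forall i : 'I_k, coord_proj i @: H == [set: 'F_2]].

Definition gauss2 (i j : nat) : rat :=
  (\prod_(l < j) ((2 ^ (i - l))%:R - 1)) / (\prod_(1 <= l < j.+1) ((2 ^ l)%:R - 1)).

(* Main.v *)
Require Import Defs.
From HB Require Import structures.
From mathcomp Require Import all_boot all_order all_algebra all_fingroup.
From mathcomp Require Import zify ring.
Set Implicit Arguments. Unset Strict Implicit. Unset Printing Implicit Defensive.
Import GRing.Theory Num.Theory FinRing.Theory.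
Local Open Scope ring_scope.

Section Gen.
Variable F : finFieldType.

Lemma card_sub_rV a m (M : 'M[F]_(a, m)) :
  #|[set v : 'rV[F]_m | (v <= M)%MS]| = (#|F| ^ \rank M)%N.
Proof.
have -> : [set v : 'rV[F]_m | (v <= M)%MS] =
   [set w *m row_base M | w in [set: 'rV[F]_(\rank M)]].
  apply/setP => v; rewrite !inE; apply/idP/imsetP.
    by rewrite -(eq_row_base M) => /submxP[w ->]; exists w; rewrite ?inE.
  by case=> w _ ->; rewrite -(eq_row_base M) submxMl.
rewrite card_imset; last first.
  have [B AB1] := row_freeP (row_base_free M).
  by apply: (can_inj (g := mulmx^~ B)) => w; rewrite -mulmxA AB1 mulmx1.
by rewrite cardsT card_mx mul1n.
Qed.

Lemma card_fr r0 m (U : 'M[F]_(r0, m)) j :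
  #|[set A : 'M[F]_(j, m) | (\rank A == j) && (A <= U)%MS]| =
  (\prod_(l < j) (#|F| ^ \rank U - #|F| ^ l))%N.
Proof.
elim: j => [|j IH].
  rewrite big_ord0; transitivity #|{: 'M[F]_(0, m)}|; last by rewrite card_mx.
  apply: eq_card => A.
  by rewrite !inE [A]flatmx0 mxrank0 eqxx sub0mx.
rewrite big_ord_recr /= -IH.
change ((#|[set A : 'M[F]_(1 + j, m) | (\rank A == (1 + j)%N) && (A <= U)%MS]| =
  (#|[set A : 'M[F]_(j, m) | (\rank A == j) && (A <= U)%MS]| *
     (#|F| ^ \rank U - #|F| ^ j)))%N).
rewrite -sum_nat_const -sum1_card.
rewrite (partition_big dsubmx (mem [set A : 'M[F]_(j, m) | (\rank A == j) && (A <= U)%MS])) /=; last first.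
  move=> A; rewrite !inE => /andP[rA sA].
  move: sA; rewrite -{1}(vsubmxK A) col_mx_sub => /andP[_ ->]; rewrite andbT.
  move: rA; rewrite -{1}(vsubmxK A) -addsmxE => /eqP rA.
  have := mxrank_adds_leqif (usubmx A) (dsubmx A); rewrite rA => [[le _]].
  have := rank_leq_row (usubmx A); have := rank_leq_row (dsubmx A).
  rewrite eqn_leq rank_leq_row /=; move: le; lia.
apply: eq_bigr => B; rewrite inE => /andP[/eqP rB sB].
rewrite (reindex (col_mx^~ B)) /=; last first.
  exists usubmx => [v _ | A]; first by rewrite col_mxKu.
  by case/andP=> _ /eqP <-; rewrite vsubmxK.
transitivity #|[set v : 'rV[F]_m | (v <= U)%MS] :\: [set v : 'rV[F]_m | (v <= B)%MS]|.
  rewrite -sum1_card; apply: eq_bigl => v; rewrite !inE col_mxKd eqxx andbT.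
  rewrite col_mx_sub sB andbT -addsmxE.
  case: (boolP (v <= B)%MS) => vB /=.
    by rewrite (addsmx_idPr vB) rB; case: eqP => //; lia.
  case: (v <= U)%MS; rewrite ?andbF //= andbT.
  have lt : (B < v + B)%MS by rewrite ltmxE addsmxSr addsmx_sub submx_refl andbT.
  have := rank_ltmx lt; rewrite rB => h1.
  have := mxrank_adds_leqif v B; rewrite rB => [[le _]].
  have := rank_leq_row v; move: h1 le; rewrite eqn_leq; lia.
rewrite cardsD !card_sub_rV; congr (_ - _)%N.
have -> : [set v : 'rV[F]_m | (v <= U)%MS] :&: [set v | (v <= B)%MS] = [set v | (v <= B)%MS].
  apply/setIidPr/subsetP => v; rewrite !inE => vB; exact: submx_trans vB sB.
by rewrite card_sub_rV rB.
Qed.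
End Gen.

Lemma F2_cases (x : 'F_2) : x = 0 \/ x = 1.
Proof. by case: x => [[|[|]]] //= ?; [left|right]; apply: val_inj. Qed.

Section F2.
Variable m : nat.
Local Notation V := 'rV['F_2]_m.

Definition spanset a (A : 'M['F_2]_(a, m)) : {set V} := [set v : V | (v <= A)%MS].

Lemma spanset_group_set a (A : 'M['F_2]_(a, m)) : group_set (spanset A).
Proof.
apply/group_setP; split; first by rewrite inE sub0mx.
by move=> x y; rewrite !inE; apply: addmx_sub.
Qed.

Definition spanG a (A : 'M['F_2]_(a, m)) := Group (spanset_group_set A).

Lemma spansetE a b (A : 'M['F_2]_(a, m)) (B : 'M['F_2]_(b, m)) :
  (spanset A == spanset B) = (A == B)%MS.
Proof.
apply/eqP/andP => [eqAB | [sAB sBA]]; last first.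
  by apply/setP => v; rewrite !inE; apply/idP/idP => h; apply: submx_trans h _.
split; apply/row_subP => i.
  have h : row i A \in spanset A by rewrite inE row_sub.
  by rewrite eqAB inE in h.
have h : row i B \in spanset B by rewrite inE row_sub.
by rewrite -eqAB inE in h.
Qed.

Definition matH (H : {set V}) := (\sum_(v in H) <<v>>)%MS.

Lemma matHE (H : {group V}) : spanset (matH H) = H.
Proof.
apply/setP => v; rewrite inE; apply/idP/idP => [|vH]; last first.
  by apply: (sumsmx_sup v) => //; rewrite genmxE.
case/sub_sums_genmxP => u ->.
apply: (big_ind (fun x => x \in H)) => //.
- by rewrite -zmod1gE group1.
- by move=> x y; apply: groupM.
move=> w wH; rewrite [u w]mx11_scalar mul_scalar_mx.
by case: (F2_cases (u w 0 0)) => ->; rewrite ?scale0r ?scale1r // -zmod1gE group1.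
Qed.


Lemma spanG_eq a (A : 'M['F_2]_(a, m)) (H : {group V}) :
  (spanG A == H) = (spanset A == H).
Proof. by []. Qed.

Lemma spanset_sub a b (A : 'M['F_2]_(a, m)) (B : 'M['F_2]_(b, m)) :
  (spanset A \subset spanset B) = (A <= B)%MS.
Proof.
apply/subsetP/idP => [h | AB v]; last by rewrite !inE => vA; exact: submx_trans vA AB.
apply/row_subP => i; have := h (row i A); rewrite !inE row_sub; exact.
Qed.

Lemma fiber (H : {group V}) :
  #|[set A : 'M['F_2]_(\rank (matH H), m) | (\rank A == \rank (matH H)) && (spanG A == H)]|
  = #|[set g : 'M['F_2]_(\rank (matH H), \rank (matH H)) |
        (\rank g == \rank (matH H)) && (g <= 1%:M)%MS]|.
Proof.
set d := \rank (matH H); set B := row_base (matH H).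
have sB : spanset B = H.
  by rewrite -{2}(matHE H); apply/eqP; rewrite spansetE; apply/eqmxP; exact: eq_row_base.
have [C BC1] := row_freeP (row_base_free (matH H)).
transitivity #|[set g *m B | g in [set g : 'M['F_2]_d | (\rank g == d) && (g <= 1%:M)%MS]]|; last first.
  apply: card_imset; apply: (can_inj (g := mulmx^~ C)) => g.
  by rewrite -mulmxA BC1 mulmx1.
apply: eq_card => A; rewrite !inE; apply/idP/imsetP.
  case/andP => rA; rewrite spanG_eq => /eqP eAH.
  have /andP[AB _] : (A == B)%MS by rewrite -spansetE eAH sB.
  case/submxP: AB => g defA; exists g; rewrite ?inE ?submx1 ?andbT //.
  by rewrite defA mxrankMfree ?row_base_free in rA.
case=> g; rewrite inE submx1 andbT => rg ->.
rewrite mxrankMfree ?row_base_free // rg /= spanG_eq; apply/eqP.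
transitivity (spanset B); last exact: sB.
by apply/eqP; rewrite spansetE; apply/eqmxP; apply: eqmxMfull.
Qed.

Lemma count_j r0 (U : 'M['F_2]_(r0, m)) j :
  #|[set A : 'M['F_2]_(j, m) | (\rank A == j) && (A <= U)%MS]| =
  (#|[set H : {group V} | (H \subset spanset U) && (\rank (matH H) == j)]| *
   #|[set g : 'M['F_2]_(j, j) | (\rank g == j) && (g <= 1%:M)%MS]|)%N.
Proof.
rewrite -sum_nat_const -sum1_card.
rewrite (partition_big (@spanG j)
   (mem [set H : {group V} | (H \subset spanset U) && (\rank (matH H) == j)])) /=; last first.
  move=> A; rewrite !inE => /andP[/eqP rA AU].
  rewrite -[spanG A : {set V}]/(spanset A) spanset_sub AU /=.
  have e : (matH (spanG A) == A)%MS by rewrite -spansetE matHE.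
  by rewrite (eqmx_rank e) rA.
apply: eq_bigr => H; rewrite inE => /andP[sHU /eqP rH].
transitivity #|[set A : 'M['F_2]_(j, m) | (\rank A == j) && (spanG A == H)]|.
  rewrite -sum1_card; apply: eq_bigl => A; rewrite !inE.
  case: eqP => //= _; case: eqP => //= eAH; rewrite ?andbT ?andbF //.
  by rewrite -spanset_sub -[spanset A]/(spanG A : {set V}) eAH.
subst j; exact: fiber.
Qed.


Lemma count_all r0 (U : 'M['F_2]_(r0, m)) :
  (#|[set H : {group V} | H \subset spanset U]|%:R : rat) =
  \sum_(j < (\rank U).+1)
    ((#|[set A : 'M['F_2]_(j, m) | (\rank A == j) && (A <= U)%MS]|%:R : rat) /
     (#|[set g : 'M['F_2]_(j, j) | (\rank g == j) && (g <= 1%:M)%MS]|%:R)).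
Proof.
rewrite -sum1_card (partition_big (fun H : {group V} => (inord (\rank (matH H)) : 'I_(\rank U).+1)) xpredT) //=.
rewrite natr_sum; apply: eq_bigr => j _.
rewrite count_j natrM mulfK; last first.
  rewrite pnatr_eq0 -lt0n card_fr mxrank1; apply: prodn_gt0 => l.
  by rewrite card_Fp // subn_gt0 ltn_exp2l.
rewrite sum1_card; congr (_%:R); apply: eq_card => H; rewrite -topredE /= !inE.
case sHU: (H \subset spanset U) => //=.
have le : (\rank (matH H) < (\rank U).+1)%N.
  by rewrite ltnS mxrankS // -spanset_sub matHE.
by rewrite -(inj_eq val_inj) /= inordK.
Qed.

End F2.

Lemma prod_split n j : (j <= n)%N ->
  ((\prod_(l < j) (2 ^ n - 2 ^ l))%N%:R : rat) =
  (\prod_(l < j) (2 ^ l)%N%:R) * \prod_(l < j) ((2 ^ (n - l))%N%:R - 1).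
Proof.
move=> hj; rewrite natr_prod -big_split; apply: eq_bigr => l _ /=.
have ln : (l <= n)%N by have := ltn_ord l; lia.
rewrite natrB ?leq_exp2l // -{1}(subnKC ln) expnD natrM mulrBr mulr1.
by rewrite ?(subnKC ln).
Qed.

Lemma gauss2E r j :
  ((\prod_(l < j) (2 ^ r - 2 ^ l))%N%:R / (\prod_(l < j) (2 ^ j - 2 ^ l))%N%:R : rat)
  = gauss2 r j.
Proof.
rewrite /gauss2; case: (leqP j r) => hj; last first.
  rewrite (bigD1 (Ordinal hj)) //= subnn mul0n mul0r.
  by rewrite (bigD1 (Ordinal hj)) //= subnn expn0 subrr !mul0r.
rewrite !prod_split // -mulf_div divff ?mul1r; last first.
  by apply/prodf_neq0 => l _; rewrite pnatr_eq0 expn_eq0.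
congr (_ / _).
rewrite big_add1 /= big_mkord [LHS](reindex_inj rev_ord_inj) /=.
by apply: eq_bigr => l _; rewrite subKn.
Qed.

Lemma count_gauss m r0 (U : 'M['F_2]_(r0, m)) :
  (#|[set H : {group 'rV['F_2]_m} | H \subset spanset U]|%:R : rat) =
  \sum_(j < (\rank U).+1) gauss2 (\rank U) j.
Proof.
rewrite count_all; apply: eq_bigr => j _.
by rewrite !card_fr mxrank1 card_Fp // gauss2E.
Qed.

Lemma sum_condc (T : finType) (P : pred T) (c : rat) :
  \sum_(x | P x) c = c *+ #|[set x | P x]|.
Proof. by rewrite -sumr_const; apply: eq_bigl => x; rewrite inE. Qed.

Lemma alt_sum (T : finType) (B : {set T}) :
  \sum_(S : {set T} | S \subset B) (-1) ^+ #|S| = ((B == set0)%:R : rat).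
Proof.
rewrite (partition_big (fun S : {set T} => (inord #|S| : 'I_#|B|.+1)) xpredT) //=.
transitivity (\sum_(i < #|B|.+1) ((-1) ^+ i *+ 'C(#|B|, i) : rat)).
  apply: eq_bigr => i _.
  transitivity (\sum_(S : {set T} | (S \subset B) && (#|S| == i)) ((-1) ^+ i : rat)).
    apply: eq_big => S.
      case sSB: (S \subset B) => //=.
      have le : (#|S| < #|B|.+1)%N by rewrite ltnS (subset_leq_card sSB).
      by rewrite -(inj_eq val_inj) /= inordK.
    by case/andP => sSB /eqP <-; rewrite inordK // ltnS (subset_leq_card sSB).
  transitivity (\sum_(S in [set S : {set T} | (S \subset B) && (#|S| == i)]) ((-1) ^+ i : rat)).
    by apply: eq_bigl => S; rewrite inE.
  by rewrite sumr_const cards_draws.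
rewrite -cards_eq0 -expr0n -(subrr (1 : rat)) exprDn.
by apply: eq_bigr => i _; rewrite expr1n mul1r.
Qed.

Definition US k (S : {set 'I_k}) : 'M['F_2]_k :=
  (\sum_(i | i \notin S) <<delta_mx 0 i : 'rV['F_2]_k>>)%MS.

Lemma US_mem k (S : {set 'I_k}) (v : 'rV['F_2]_k) :
  (v <= US S)%MS = [forall i in S, v 0 i == 0].
Proof.
apply/idP/forall_inP => [vU i iS | h].
  have : (v <= kermx (delta_mx i 0 : 'M['F_2]_(k, 1)))%MS.
    apply: submx_trans vU _; apply/sumsmx_subP => j jS; rewrite genmxE.
    apply/sub_kermxP; rewrite mul_delta_mx_cond.
    by case: eqP => [ji|]; [rewrite ji iS in jS | rewrite mulr0n].
  move/sub_kermxP; rewrite -colE => /matrixP /(_ 0 0).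
  by rewrite !mxE => ->.
rewrite [v]row_sum_delta; apply: summx_sub => i _.
case iS: (i \in S); first by rewrite (eqP (h i iS)) scale0r sub0mx.
by apply: scalemx_sub; apply: (sumsmx_sup i); rewrite ?iS // genmxE.
Qed.

Lemma US_rank k (S : {set 'I_k}) : \rank (US S) = (k - #|S|)%N.
Proof.
have := @mxdirect_delta 'F_2 'I_k (fun i => i \notin S) k id (fun x y _ _ => id).
move/mxdirectP => /= ->.
have -> : (k - #|S| = #|~: S|)%N by rewrite [#|~: S|]cardsCs setCK card_ord.
rewrite -sum1_card.
by apply: eq_big => [i|i _]; rewrite ?inE // mxrank_gen mxrank_delta.
Qed.

Definition Zs k (H : {set 'rV['F_2]_k}) := [set i : 'I_k | [forall v in H, v 0 i == 0]].

Lemma projE k (H : {group 'rV['F_2]_k}) : proj_surjective H = (Zs H == set0).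
Proof.
rewrite /proj_surjective; apply/forallP/eqP => [h | Z0 i].
  apply/setP => i; rewrite !inE; apply/negbTE.
  have /eqP e := h i.
  have : (1 : 'F_2) \in coord_proj i @: H by rewrite e inE.
  case/imsetP => v vH e1; apply/forall_inP => /(_ v vH).
  by rewrite /coord_proj in e1; rewrite -e1 oner_eq0.
have : i \notin Zs H by rewrite Z0 inE.
rewrite inE => /forall_inPn [v vH nz].
apply/eqP/setP => x; rewrite inE; case: (F2_cases x) => ->; apply/imsetP.
  by exists 0; [rewrite -zmod1gE group1 | rewrite /coord_proj mxE].
exists v => //; rewrite /coord_proj; case: (F2_cases (v 0 i)) nz => -> //.
Qed.

Lemma subZ k (S : {set 'I_k}) (H : {group 'rV['F_2]_k}) :
  (S \subset Zs H) = (H \subset spanset (US S)).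
Proof.
apply/subsetP/subsetP => h x xH.
  rewrite inE US_mem; apply/forall_inP => i iS.
  by have := h i iS; rewrite inE => /forall_inP; apply.
rewrite inE; apply/forall_inP => v vH.
by have := h v vH; rewrite inE US_mem => /forall_inP; apply.
Qed.

Theorem mainTheorem5 (k : nat) :
  (#|[set H : {group 'rV['F_2]_k} | proj_surjective H]|%:R : rat) =
  \sum_(i < k.+1) (-1) ^+ (i + k) * ('C(k, i))%:R * \sum_(j < i.+1) gauss2 i j.
Proof.
transitivity (\sum_(H : {group 'rV['F_2]_k}) \sum_(S : {set 'I_k} | S \subset Zs H)
                 ((-1) ^+ #|S| : rat)).
  rewrite -sum1_card natr_sum big_mkcond /=; apply: eq_bigr => H _.
  by rewrite alt_sum inE projE; case: (_ == _).
rewrite (eq_bigr (fun H : {group 'rV['F_2]_k} => \sum_(S : {set 'I_k})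
    (if S \subset Zs H then (-1) ^+ #|S| else 0 : rat))); last first.
  by move=> H _; rewrite big_mkcond.
rewrite exchange_big /=.
transitivity (\sum_(S : {set 'I_k}) ((-1) ^+ #|S| *
   \sum_(j < (k - #|S|).+1) gauss2 (k - #|S|) j)).
  apply: eq_bigr => S _; rewrite -big_mkcond /=.
  rewrite (eq_bigl (fun H => H \in [set H : {group 'rV['F_2]_k} | H \subset spanset (US S)]))
     => [|H]; last by rewrite inE subZ.
  by rewrite sumr_const -mulr_natr count_gauss US_rank.
rewrite (partition_big (fun S : {set 'I_k} => (inord #|S| : 'I_k.+1)) xpredT) //=.
rewrite [RHS](reindex_inj rev_ord_inj) /=; apply: eq_bigr => i _.
transitivity (\sum_(S in [set S : {set 'I_k} | #|S| == i])
   ((-1) ^+ i * \sum_(j < (k - i).+1) gauss2 (k - i) j : rat)).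
  apply: eq_big => S; have le : (#|S| < k.+1)%N by
     rewrite ltnS; have := max_card (mem S); rewrite card_ord.
    by rewrite [in RHS]inE -(inj_eq val_inj) /= inordK.
  by move/eqP => <-; rewrite inordK.
rewrite sumr_const card_draws card_ord -mulr_natr subSS.
have ik : (i <= k)%N by rewrite -ltnS.
have sg : ((-1) ^+ (k - i + k) : rat) = (-1) ^+ i.
  rewrite -signr_odd -[in RHS]signr_odd; congr ((-1) ^+ (nat_of_bool _)).
  have -> : (k - i + k = i + (k - i) * 2)%N by lia.
  by rewrite oddD oddM /= andbF addbF.
rewrite bin_sub // sg -mulr_natr !mul1r; ring.
Qed.
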